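(* Let $K$, $M=\begin{pmatrix}\alpha&\beta\\ \overline{\beta}&\gamma\end{pmatrix}$, $Q$, $\Delta$, $\varepsilon$ be as in the context, let $\lambda\in\mathbb{Q}_{>0}$ and let $\delta\in K$ with $|\delta|^2=\Delta$. Define $F:K^2\times K^2\to L^2$ by \[F\big((x,y)^T,(w,z)^T\big):=\big(\overline{z}+\overline{y}\sqrt{\varepsilon}\,j,\ -w+\overline{x}\sqrt{\varepsilon}\,j\big).\] Then $F$ restricts to a bijection between $\mathcal{B}_Q(\delta,\lambda)$ and $\mathcal{F}_{\alpha\lambda/\Delta}\!\left(\tfrac{\lambda}{\Delta}(\beta+\delta\sqrt{\varepsilon}\,j)\right)$.
   Context: $K$ is $\mathbb{Q}$ or an imaginary quadratic field, viewed inside $\mathbb{C}$, and $\mathbb{C}$ is identified with $\mathbb{R}+\mathbb{R}i$ inside the Hamilton quaternions $\mathbb{H}=\{a+bi+cj+dk\}$ (so $sj=j\overline{s}$ for $s\in K$). $M\in K^{2\times2}$ is positive definite hermitian, $Q(v)=v^*Mv$. A rational number is an absolute square in $K$ if it equals $|y|^2$ for some $y\in K$; write $\mu=\det M=\Delta\varepsilon$ with $\Delta\in\mathbb{Q}$ an absolute square in $K$ and $\varepsilon$ a positive integer whose only positive divisor that is an absolute square in $K$ is $1$. A pair $(a_1,a_2)\in K^2\times K^2$ is a $Q$-orthobalanced basis of norm $\lambda$ if $A^*MA=\lambda\,\mathrm{diag}(1,\varepsilon)$ for $A=(a_1|a_2)$; it is of type $\delta$ if $a_2=(Ma_1)_\perp/\delta$,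 where $(x,y)^T_\perp:=(-\overline{y},\overline{x})^T$. $\mathcal{B}_Q(\delta,\lambda)$ is the set of $Q$-orthobalanced bases of norm $\lambda$ and type $\delta$. $L:=\{r+s\sqrt{\varepsilon}\,j: r,s\in K\}\subseteq\mathbb{H}$, and for $t\in L$, $\nu\in\mathbb{Q}$: $\mathcal{F}_\nu(t):=\{(u,v)\in L^2: t=uv,\ |u|^2=\nu\}$, where $|\cdot|$ is the quaternion norm. *)

(* Defs.v *)
From mathcomp Require Import all_boot all_order all_algebra all_field.
Set Implicit Arguments. Unset Strict Implicit. Unset Printing Implicit Defensive.
Import Order.TTheory GRing.Theory Num.Theory.
Local Open Scope ring_scope.

(* Complex numbers are modelled by algC (algebraic complex numbers);
   all quantities in the statement are algebraic. *)

Definition Q_or_imag_quadratic (K : {pred algC}) : Prop :=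
  (forall x, (x \in K) = (x \in Crat)) \/
  (exists d : nat, (0 < d)%N /\
     forall x, x \in K <-> exists a b, a \in Crat /\ b \in Crat /\
                                       x = a + b * sqrtC (- d%:R)).

Definition i0 : 'I_2 := ord0.
Definition i1 : 'I_2 := ord_max.

Definition mxadj m n (A : 'M[algC]_(m, n)) : 'M[algC]_(n, m) := (map_mx (fun z : algC => z^*) A)^T.

Definition mx_over_K (K : {pred algC}) m n (A : 'M[algC]_(m, n)) : Prop :=
  forall i j, A i j \in K.

Definition mx_hermitian n (M : 'M[algC]_n) : Prop := mxadj M = M.

Definition mx_posdef n (M : 'M[algC]_n) : Prop :=
  forall v : 'cV[algC]_n, v != 0 -> 0 < (mxadj v *m M *m v) 0 0.

Definition abs_square_in (K : {pred algC}) (r : algC) : Prop :=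
  r \in Crat /\ exists y, y \in K /\ r = y * y^*.

Definition perp (v : 'cV[algC]_2) : 'cV[algC]_2 :=
  \col_(i < 2) (if i == i0 then - (v i1 0)^* else (v i0 0)^*).

Definition diag1e (eps : nat) : 'M[algC]_2 :=
  diag_mx (\row_(i < 2) (if i == i0 then 1 else eps%:R)).

Definition orthobalanced (M : 'M[algC]_2) (eps : nat) (lambda : algC)
  (a1 a2 : 'cV[algC]_2) : Prop :=
  let A : 'M[algC]_2 := row_mx a1 a2 in
  mxadj A *m M *m A = lambda *: diag1e eps.

Definition BQ (K : {pred algC}) (M : 'M[algC]_2) (eps : nat) (delta lambda : algC)
  (p : 'cV[algC]_2 * 'cV[algC]_2) : Prop :=
  mx_over_K K p.1 /\ mx_over_K K p.2 /\
  orthobalanced M eps lambda p.1 p.2 /\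
  p.2 = delta^-1 *: perp (M *m p.1).

(* Hamilton quaternions q = qa + qb j with qa, qb complex (C = R + R i),
   using j z = conj(z) j and j^2 = -1. *)
Record quat := Quat { qa : algC; qb : algC }.

Definition qmul (p q : quat) : quat :=
  Quat (qa p * qa q - qb p * (qb q)^*) (qa p * qb q + qb p * (qa q)^*).

Definition qnorm2 (q : quat) : algC := qa q * (qa q)^* + qb q * (qb q)^*.

Definition inL (K : {pred algC}) (eps : nat) (q : quat) : Prop :=
  exists r s, r \in K /\ s \in K /\ q = Quat r (s * sqrtC eps%:R).

Definition Fset (K : {pred algC}) (eps : nat) (nu : algC) (t : quat)
  (uv : quat * quat) : Prop :=
  inL K eps uv.1 /\ inL K eps uv.2 /\ t = qmul uv.1 uv.2 /\ qnorm2 uv.1 = nu.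

Definition Fmap (eps : nat) (p : 'cV[algC]_2 * 'cV[algC]_2) : quat * quat :=
  let x := p.1 i0 0 in let y := p.1 i1 0 in
  let w := p.2 i0 0 in let z := p.2 i1 0 in
  (Quat z^* (y^* * sqrtC eps%:R), Quat (- w) (x^* * sqrtC eps%:R)).

Definition bij_between (T U : Type) (A : T -> Prop) (B : U -> Prop) (f : T -> U) : Prop :=
  (forall x, A x -> B (f x)) /\
  (forall x y, A x -> A y -> f x = f y -> x = y) /\
  (forall u, B u -> exists x, A x /\ f x = u).

(* Main.v *)
Require Import Defs.
From mathcomp Require Import all_boot all_order all_algebra all_field.
From mathcomp Require Import ring lra.
Import Order.TTheory GRing.Theory Num.Theory.
Local Open Scope ring_scope.

Lemma sum2 (F : 'I_2 -> algC) : \sum_(i < 2) F i = F i0 + F i1.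
Proof. by rewrite big_ord_recl big_ord1; congr (_ + F _); apply: val_inj. Qed.
Lemma ord2 (i : 'I_2) : i = i0 \/ i = i1.
Proof. by case: i => [[|[|]]] // ?; [left|right]; apply: val_inj. Qed.
Lemma mul2E m n (A : 'M[algC]_(m,2)) (B : 'M[algC]_(2,n)) i j :
  (A *m B) i j = A i i0 * B i0 j + A i i1 * B i1 j.
Proof. by rewrite mxE sum2. Qed.
Lemma adjE m n (A : 'M[algC]_(m,n)) i j : mxadj A i j = (A j i)^*.
Proof. by rewrite /mxadj !mxE. Qed.
Lemma rowE0 (a1 a2 : 'cV[algC]_2) i : (row_mx a1 a2 : 'M_2) i i0 = a1 i 0.
Proof. rewrite mxE; case: splitP => k hk; rewrite ?(ord1 k) //; move: hk; rewrite /i0 /i1 /=; by case: k => [[|]]. Qed.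
Lemma rowE1 (a1 a2 : 'cV[algC]_2) i : (row_mx a1 a2 : 'M_2) i i1 = a2 i 0.
Proof. rewrite mxE; case: splitP => k hk; rewrite ?(ord1 k) //; move: hk; rewrite /i0 /i1 /=; by case: k => [[|]]. Qed.

Lemma cM (x y : algC) : (x * y)^* = x^* * y^*. Proof. exact: rmorphM. Qed.
Lemma cD (x y : algC) : (x + y)^* = x^* + y^*. Proof. exact: rmorphD. Qed.
Lemma cB (x y : algC) : (x - y)^* = x^* - y^*. Proof. exact: rmorphB. Qed.
Lemma cN (x : algC) : (- x)^* = - x^*. Proof. exact: rmorphN. Qed.
Lemma cV (x : algC) : (x^-1)^* = (x^*)^-1. Proof. exact: fmorphV. Qed.
Lemma cK (x : algC) : (x^*)^* = x. Proof. exact: conjCK. Qed.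

Lemma key (M : 'M[algC]_2) (delta lambda : algC) (eps : nat) (a1 : 'cV[algC]_2) :
  (M i0 i0)^* = M i0 i0 -> (M i1 i1)^* = M i1 i1 -> M i1 i0 = (M i0 i1)^* ->
  M i0 i0 != 0 ->
  M i0 i0 * M i1 i1 - M i0 i1 * (M i0 i1)^* = delta * delta^* * eps%:R ->
  delta != 0 ->
  sqrtC (eps%:R : algC) * sqrtC (eps%:R : algC) = eps%:R -> (sqrtC (eps%:R : algC))^* = sqrtC (eps%:R : algC) ->
  let a2 := delta^-1 *: perp (M *m a1) in
  let Q := (mxadj a1 *m M *m a1) 0 0 in
  (orthobalanced M eps lambda a1 a2 <-> Q = lambda) /\
  qnorm2 (Fmap eps (a1, a2)).1 = M i0 i0 * Q / (delta * delta^*) /\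
  qmul (Fmap eps (a1, a2)).1 (Fmap eps (a1, a2)).2 =
    Quat (Q / (delta * delta^*) * M i0 i1) (Q / (delta * delta^*) * (delta * sqrtC eps%:R)).
Proof.
move=> Ha Hc Hb Ha0 Hdet Hd0 Hs Hsc a2 Q.
have Hdc : delta^* != 0 by rewrite conjC_eq0.
have Hcsol : M i1 i1 = (delta * delta^* * eps%:R + M i0 i1 * (M i0 i1)^*) / M i0 i0 by
   rewrite -Hdet; field.
rewrite /a2 /Q /orthobalanced /Fmap /qnorm2 /qmul /=.
split; last first.
  rewrite !(mul2E, adjE, rowE0, rowE1, mxE) /=.
  rewrite !(cM, cD, cB, cN, cV, cK) Hb Ha Hc Hsc ?cK.
  rewrite -{1}Hs in Hcsol; rewrite Hcsol.
  split; last congr Quat; field; by rewrite ?Ha0 ?Hd0 ?Hdc.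
split.
  move/matrixP/(_ i0 i0); rewrite !(mul2E, adjE, rowE0, rowE1, mxE) /= => H.
  by rewrite mulr1 in H; rewrite -H.
move=> HQ; apply/matrixP=> i j; rewrite -HQ.
have H01 : (i1 == i0) = false by [].
have H10 : (i0 == i1) = false by [].
case: (ord2 i) (ord2 j) => -> [] ->;
  rewrite !(mul2E, adjE, rowE0, rowE1, mxE) /= ?eqxx ?H01 ?H10 /=;
  rewrite ?(cM, cD, cB, cN, cV, cK) ?Hb ?Ha ?Hc ?Hsc ?cK ?Hcsol; (try rewrite -Hs);
  field; by rewrite ?Ha0 ?Hd0 ?Hdc.
Qed.

Lemma det2 (M : 'M[algC]_2) : \det M = M i0 i0 * M i1 i1 - M i0 i1 * M i1 i0.
Proof.
rewrite (expand_det_row _ i0) sum2 /cofactor !det_mx11 !mxE /=.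
have -> : lift i0 (0 : 'I_1) = i1 by apply: val_inj.
have -> : lift i1 (0 : 'I_1) = i0 by apply: val_inj.
rewrite /= expr0 expr1 mul1r mulN1r; ring.
Qed.

Lemma qcancel (u v v' : quat) : qnorm2 u != 0 -> qmul u v = qmul u v' -> v = v'.
Proof.
move=> Hn H.
have E w : qmul (Quat (qa u)^* (- qb u)) (qmul u w) = Quat (qnorm2 u * qa w) (qnorm2 u * qb w).
  case: u {Hn H} w => a b [c d]; rewrite /qmul /qnorm2 /=.
  rewrite !(cM, cD, cB, cN, cK); congr Quat; ring.
have := congr1 (qmul (Quat (qa u)^* (- qb u))) H; rewrite !E => -[h1 h2]; clear H.
case: v v' h1 h2 => [c d] [c' d'] /= /(mulfI Hn) -> /(mulfI Hn) -> //.
Qed.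

Lemma Fmap_inj eps p q : sqrtC (eps%:R : algC) != 0 -> Fmap eps p = Fmap eps q -> p = q.
Proof.
case: p q => [a1 a2] [b1 b2] Hs; rewrite /Fmap => -[h1 h2 h3 h4].
have ci := can_inj cK.
move/(mulIf Hs)/ci: h2 => h2; move/(mulIf Hs)/ci: h4 => h4.
move/ci: h1 => h1; move/oppr_inj: h3 => h3.
congr pair; apply/matrixP => i j; rewrite (ord1 j); case: (ord2 i) => -> //.
Qed.

Lemma imag_conj (d : nat) : (0 < d)%N -> (sqrtC (- d%:R : algC))^* = - sqrtC (- d%:R).
Proof.
move=> Hd; set r := sqrtC _.
have Hr : r ^+ 2 = - d%:R by rewrite sqrtCK.
have : (r^*) ^+ 2 == r ^+ 2.
  by rewrite -rmorphXn Hr rmorphN /= conjC_nat.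
rewrite eqf_sqr => /orP [/eqP h|/eqP //].
have : r \is Num.real by rewrite CrealE h.
rewrite realEsqr Hr oppr_ge0 lern0 => /eqP Hd0.
by move: Hd; rewrite Hd0.
Qed.

Lemma Kconj K x : Q_or_imag_quadratic K -> x \in K -> x^* \in K.
Proof.
case=> [HK|[d [Hd HK]]].
  by rewrite !HK => hx; rewrite conj_Creal ?Creal_Crat.
move/HK=> [a [b [ha [hb ->]]]]; apply/HK.
exists a, (- b); split => //; split; first by rewrite rpredN.
rewrite cD cM imag_conj // (conj_Creal (Creal_Crat ha)) (conj_Creal (Creal_Crat hb)).
by rewrite mulrN mulNr.
Qed.

Lemma Kneg K x : Q_or_imag_quadratic K -> x \in K -> - x \in K.
Proof.
case=> [HK|[d [Hd HK]]].
  by rewrite !HK => hx; rewrite rpredN.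
move/HK=> [a [b [ha [hb ->]]]]; apply/HK.
exists (- a), (- b); split; first by rewrite rpredN.
split; first by rewrite rpredN.
by rewrite opprD mulNr.
Qed.

Theorem mainTheorem10 (K : {pred algC}) (M : 'M[algC]_2) (Delta : algC) (eps : nat)
  (lambda delta : algC) :
  Q_or_imag_quadratic K ->
  mx_over_K K M -> mx_hermitian M -> mx_posdef M ->
  \det M = Delta * eps%:R ->
  abs_square_in K Delta ->
  (0 < eps)%N ->
  (forall d : nat, (0 < d)%N -> (d %| eps)%N -> abs_square_in K d%:R -> d = 1%N) ->
  lambda \in Crat -> 0 < lambda ->
  delta \in K -> delta * (delta^*)%C = Delta ->
  let alpha := M i0 i0 in
  let beta := M i0 i1 in
  bij_between (BQ K M eps delta lambda)
    (Fset K eps (alpha * lambda / Delta)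
       (Quat (lambda / Delta * beta) (lambda / Delta * (delta * sqrtC eps%:R))))
    (Fmap eps).
Proof.
move=> HK HMK Hherm Hpos Hdet HDelta Heps Hsqf Hlr Hl0 HdK Hdd alpha beta.
subst Delta.
have Hh i j : M j i = (M i j)^* by rewrite -[in LHS]Hherm adjE.
have Ha : (M i0 i0)^* = M i0 i0 by rewrite -Hh.
have Hc : (M i1 i1)^* = M i1 i1 by rewrite -Hh.
have Hb : M i1 i0 = (M i0 i1)^* by rewrite -Hh.
have Ha0 : 0 < M i0 i0.
  have := Hpos (\col_i (if i == i0 then 1 else 0)).
  rewrite !(mul2E, adjE, mxE) /= conjC1 conjC0 !(mulr0, mul0r, mulr1, mul1r, addr0, add0r).
  move=> H. have Hv : (\col_i (if i == i0 then 1 else 0) : 'cV[algC]_2) != 0. apply/eqP => /matrixP /(_ i0 0); rewrite !mxE /=; apply/eqP; exact: oner_neq0.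
  exact: (H Hv).
have Ha0' : M i0 i0 != 0 by rewrite gt_eqF.
have Hdetpos : 0 < \det M.
  have := Hpos (\col_i (if i == i0 then - M i0 i1 else M i0 i0)).
  rewrite !(mul2E, adjE, mxE) /= ?(cM, cD, cB, cN, cV, cK) det2 Ha Hb.
  have -> : ((- (M i0 i1)^* * M i0 i0 + M i0 i0 * (M i0 i1)^*) * - M i0 i1 +
     (- (M i0 i1)^* * M i0 i1 + M i0 i0 * M i1 i1) * M i0 i0) =
     M i0 i0 * (M i0 i0 * M i1 i1 - M i0 i1 * (M i0 i1)^*) by ring.
  rewrite pmulr_rgt0 // => H; apply: H.
  apply/eqP => /matrixP /(_ i1 0); rewrite !mxE /= => /eqP; by rewrite (negbTE Ha0').
have HD0 : delta * delta^* != 0.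
  apply/eqP => h; move: Hdetpos; by rewrite Hdet h mul0r ltxx.
have Hd0 : delta != 0 by apply: contraNneq HD0 => ->; rewrite mul0r.
have Hdet' : M i0 i0 * M i1 i1 - M i0 i1 * (M i0 i1)^* = delta * delta^* * eps%:R.
  by rewrite -Hdet det2 Hb.
have Hs : sqrtC (eps%:R : algC) * sqrtC (eps%:R : algC) = eps%:R by rewrite -expr2 sqrtCK.
have Hsc : (sqrtC (eps%:R : algC))^* = sqrtC (eps%:R : algC).
  by rewrite geC0_conj // sqrtC_ge0 ler0n.
have Hs0 : sqrtC (eps%:R : algC) != 0 by rewrite sqrtC_eq0 pnatr_eq0 -lt0n.
have KEY a1 := @key M delta lambda eps a1 Ha Hc Hb Ha0' Hdet' Hd0 Hs Hsc.
cbv zeta in KEY.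
rewrite /alpha /beta.
split; [|split].
- move=> [a1 a2] [Ho1 [Ho2 [Hob Ht]]] /=; simpl in Ho1, Ho2, Hob, Ht.
  have [HQ [Hn Hm]] := KEY a1.
  rewrite Ht in Hob; have HQl := (proj1 HQ) Hob.
  split; [|split; [|split]].
  + exists (a2 i1 0)^*, (a1 i1 0)^*; split; [exact: Kconj|split; [exact: Kconj|by []]].
  + exists (- a2 i0 0), (a1 i0 0)^*; split; [exact: Kneg|split; [exact: Kconj|by []]].
  + by rewrite Ht Hm HQl.
  + by rewrite Ht Hn HQl.
- move=> p q _ _; exact: Fmap_inj.
- move=> [u1 u2] [[r [s1 [hr [hs1 Hu1]]]] [[r' [s2 [hr' [hs2 Hu2]]]] [Ht Hn]]].
  simpl in Hu1, Hu2, Ht, Hn.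
  pose a1 : 'cV[algC]_2 := \col_i (if i == i0 then s2^* else s1^*).
  pose a2 : 'cV[algC]_2 := \col_i (if i == i0 then - r' else r^*).
  have HF : Fmap eps (a1, a2) = (u1, u2) by rewrite Hu1 Hu2 /Fmap !mxE /= !cK opprK.
  pose b1 : 'cV[algC]_2 :=
    \col_i (if i == i0 then (delta^* * r - M i0 i1 * s1^*) / M i0 i0 else s1^*).
  have [HQ [Hn' Hm']] := KEY b1.
  have HF1 : (Fmap eps (b1, delta^-1 *: perp (M *m b1))).1 = u1.
    rewrite Hu1 /Fmap /=; congr Quat; last by rewrite !mxE /= cK.
    rewrite !(mul2E, mxE) /= !(cM, cD, cB, cN, cV, cK) ?Ha.
    field; by rewrite ?Ha0' ?conjC_eq0 ?Hd0.
  have HQl : (mxadj b1 *m M *m b1) 0 0 = lambda.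
    move: Hn'; rewrite HF1 Hn => /(mulIf (invr_neq0 HD0)) /(mulfI Ha0') //.
  have Hu1n : qnorm2 u1 != 0.
    by rewrite Hn !mulf_neq0 ?invr_neq0 // gt_eqF.
  have HF2 : (Fmap eps (b1, delta^-1 *: perp (M *m b1))).2 = u2.
    apply: (@qcancel u1 _ _ Hu1n); rewrite -Ht -{1}HF1 Hm' HQl //.
  have Heq : (b1, delta^-1 *: perp (M *m b1)) = (a1, a2).
    apply: (@Fmap_inj eps _ _ Hs0); rewrite HF; move: HF1 HF2.
    by case: (Fmap eps _) => ? ? /= -> ->.
  exists (a1, a2); split; last by [].
  split; [|split].
  + move=> i j; rewrite (ord1 j) mxE; case: (ord2 i) => -> /=; exact: Kconj.
  + move=> i j; rewrite (ord1 j) mxE; case: (ord2 i) => -> /=; [exact: Kneg|exact: Kconj].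
  + case: Heq => <- <- /=; split; last by [].
    by apply/(proj2 HQ).
Qed.
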